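(* Let $q$ be a prime power with $q\equiv 1 \pmod 3$, and let $\pi,\sigma$ be vertices of the graph $C_A(q)$, with $\sigma(x)=ax+r$ and $\pi(x)=bx+s$ ($a,b\in GF(q)\setminus\{0\}$, $r,s\in GF(q)$). (a) If $a\neq b$, then $hd(\pi,\sigma)=q-1$. (b) If $\pi(F)=F$, then $\pi$ is an isolated vertex of $C_A(q)$. There are exactly $q-1$ elements $\pi\in AGL(1,q)$ with $\pi(F)=F$. (c) If $\pi$ and $\sigma$ are adjacent in $C_A(q)$, then $hd(\pi,\sigma)=q-1$, $hd(\pi^{\triangle},\sigma^{\triangle})=hd(\pi,\sigma)-3$, and $a/b$ and $b/a$ are the two distinct roots in $GF(q)$ of $t^2+t+1=0$.
   Context: $AGL(1,q)=\{x\mapsto ax+b: a\in GF(q)\setminus\{0\}, b\in GF(q)\}$, acting on $GF(q)$. For permutations $\pi,\sigma$ of a finite set, $hd(\pi,\sigma)$ is the number of points at which they differ. Fix a distinguished element $F\in GF(q)$. For a permutation $\pi$ of $GF(q)$, $\pi^{\triangle}$ is the permutation with $\pi^{\triangle}(\pi^{-1}(F))=\pi(F)$, $\pi^{\triangle}(F)=F$, and $\pi^{\triangle}(x)=\pi(x)$ otherwise. The contraction graph $C_A(q)$ has vertex set $AGL(1,q)$, with distinct $\pi,\sigma$ adjacent iff $hd(\pi^{\triangle},\sigma^{\triangle})=q-4$. *)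

(* Defs.v *)
From HB Require Import structures.
From mathcomp Require Import all_boot all_order all_algebra all_fingroup all_field.
Set Implicit Arguments. Unset Strict Implicit. Unset Printing Implicit Defensive.
Import GRing.Theory.
Local Open Scope ring_scope.

Definition hd (T : finType) (f g : T -> T) : nat := #|[set x | f x != g x]|.

Definition is_affine (F : finFieldType) (p : {perm F}) : bool :=
  [exists a : F, exists b : F, (a != 0) && [forall x, p x == a * x + b]].

Definition tri (T : finType) (f0 : T) (p : {perm T}) (x : T) : T :=
  if x == f0 then f0 else if x == (p^-1)%g f0 then p f0 else p x.

Definition adjC (F : finFieldType) (f0 : F) (p s : {perm F}) : bool :=
  [&& is_affine p, is_affine s, p != s &
      hd (tri f0 p) (tri f0 s) == (#|F| - 4)%N].

(* Main.v *)
Require Import Defs.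
From mathcomp Require Import all_boot all_order all_algebra all_fingroup all_field.
From mathcomp Require Import ring zify.
From Stdlib Require Import Lia.
Set Implicit Arguments. Unset Strict Implicit.
Import GRing.Theory.
Local Open Scope ring_scope.

Lemma agr_uniq (F : finFieldType) (p q : {perm F}) (a b r s : F) :
  (forall x, q x = a * x + r) -> (forall x, p x = b * x + s) -> p != q ->
  forall x y, p x = q x -> p y = q y -> x = y.
Proof.
move=> hq hp npq x y hx hy.
have hab : a != b.
  apply: contraNneq npq => eab; apply/eqP/permP => z.
  rewrite hp hq in hx; rewrite -eab in hx; have esr := addrI _ hx.
  by rewrite hp hq -eab esr.
rewrite !hp !hq in hx hy.
have : (b - a) * (x - y) = 0.
  have -> : (b - a) * (x - y) = (b*x + s - (a*x + r)) - (b*y + s - (a*y+r)) by ring.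
  by rewrite hx hy !subrr.
by move/eqP; rewrite mulf_eq0 subr_eq0 eq_sym (negbTE hab) /= subr_eq0 => /eqP.
Qed.

Lemma card_agr (F : finFieldType) (p q : {perm F}) (a b r s : F) :
  (forall x, q x = a * x + r) -> (forall x, p x = b * x + s) -> p != q ->
  (#|[set x | p x == q x]| <= 1)%N.
Proof.
move=> hq hp npq; apply/card_le1_eqP => x y; rewrite !inE => /eqP hx /eqP hy.
exact: (agr_uniq hq hp npq hy hx).
Qed.

Lemma hd_compl (T : finType) (f g : T -> T) :
  (hd f g + #|[set x | f x == g x]|)%N = #|T|.
Proof.
rewrite /hd.
have -> : [set x | f x != g x] = ~: [set x | f x == g x].
  by apply/setP => x; rewrite !inE.
by rewrite addnC cardsC.
Qed.

Lemma E_sub (T : finType) (f0 : T) (p q : {perm T}) :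
  [set x | tri f0 p x == tri f0 q x] \subset
  f0 |: ((p^-1)%g f0 |: ((q^-1)%g f0 |: [set x | p x == q x])).
Proof.
apply/subsetP => x; rewrite !inE /tri.
case: (x =P f0) => //= _; case: (x =P (p^-1)%g f0) => //= _.
by case: (x =P (q^-1)%g f0).
Qed.

Lemma affine_ex (F : finFieldType) (p : {perm F}) :
  is_affine p -> exists c d, c != 0 /\ forall x, p x = c * x + d.
Proof.
move=> /existsP[c /existsP[d /andP[hc /forallP h]]].
by exists c, d; split => // x; apply/eqP.
Qed.

Lemma F4 (F : finFieldType) : (#|F| %% 3 = 1)%N -> (4 <= #|F|)%N.
Proof.
move=> hq; have : (1 < #|F|)%N by exact: finNzRing_gt1.
move: hq; case: #|F| => [|[|[|[|n]]]] //.
Qed.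

Lemma part_a (F : finFieldType) (pi sigma : {perm F}) (a b r s : F)
    (hsig : forall x, sigma x = a * x + r) (hpi : forall x, pi x = b * x + s) :
  a != b -> hd pi sigma = (#|F| - 1)%N.
Proof.
move=> hab.
have npq : pi != sigma.
  apply: contraNneq hab => e.
  have : pi 1 - pi 0 = sigma 1 - sigma 0 by rewrite e.
  rewrite !hpi !hsig.
  have -> : b * 1 + s - (b * 0 + s) = b by ring.
  have -> : a * 1 + r - (a * 0 + r) = a by ring.
  by move->.
have hba : b - a != 0 by rewrite subr_eq0 eq_sym.
set z := (r - s) / (b - a).
have hz : pi z = sigma z.
  rewrite hpi hsig /z; field; exact: hba.
rewrite /hd.
have -> : [set x | pi x != sigma x] = [set~ z].
  apply/setP => x; rewrite !inE; congr negb; apply/eqP/eqP => [h|->//].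
  exact: (agr_uniq hsig hpi npq h hz).
by rewrite cardsC1 subn1.
Qed.

Definition hfun (F : finFieldType) (f0 a : F) (x : F) :=
  (if a == 0 then 1 else a) * (x - f0) + f0.

Lemma hfun_inj (F : finFieldType) (f0 a : F) : injective (hfun f0 a).
Proof.
have hnz : (if a == 0 then 1 else a) != 0.
  by case: (a =P 0) => [_|/eqP //]; exact: oner_neq0.
by move=> x y; rewrite /hfun => /addIr /(mulfI hnz) /addIr.
Qed.

Definition mkp (F : finFieldType) (f0 a : F) : {perm F} := perm (@hfun_inj F f0 a).

Lemma count_fix (F : finFieldType) (f0 : F) :
  #|[set p : {perm F} | is_affine p && (p f0 == f0)]| = (#|F| - 1)%N.
Proof.
have -> : [set p : {perm F} | is_affine p && (p f0 == f0)] =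
          mkp f0 @: [set a : F | a != 0].
  apply/setP => p; rewrite inE; apply/idP/imsetP.
    case/andP => /affine_ex [c [d [hc hpx]]] /eqP hpf.
    exists c; first by rewrite inE.
    apply/permP => x; rewrite permE /hfun (negbTE hc) hpx.
    rewrite hpx in hpf.
    apply/eqP; rewrite -subr_eq0.
    have -> : c * x + d - (c * (x - f0) + f0) = (c * f0 + d) - f0 by ring.
    by rewrite hpf subrr.
  case => a; rewrite inE => ha ->; apply/andP; split.
    apply/existsP; exists a; apply/existsP; exists (f0 - a * f0).
    rewrite ha /=; apply/forallP => x; rewrite permE /hfun (negbTE ha).
    apply/eqP; ring.
  by rewrite permE /hfun subrr mulr0 add0r.
rewrite card_in_imset.
  have -> : [set a : F | a != 0] = [set~ 0] by apply/setP => x; rewrite !inE.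
  by rewrite cardsC1 subn1.
move=> a a'; rewrite !inE => ha ha' e.
have := congr1 (fun p : {perm F} => p (1 + f0)) e.
by rewrite /= !permE /hfun (negbTE ha) (negbTE ha') addrK !mulr1 => /addIr.
Qed.

Lemma nat_b (n k : nat) : (3 < n)%N -> (k <= 3)%N -> (n - 4 + k)%N = n -> False.
Proof. lia. Qed.

Lemma isolated (F : finFieldType) (f0 : F) (hq : (#|F| %% 3 = 1)%N)
    (pi : {perm F}) (b s : F) (hpi : forall x, pi x = b * x + s) :
  pi f0 = f0 -> forall tau : {perm F}, ~~ adjC f0 pi tau.
Proof.
move=> hf tau; apply/negP; case/and4P => _ /affine_ex [c [d [hc htau]]] npt /eqP hd4.
have hsub := E_sub f0 pi tau.
have hu : (pi^-1)%g f0 = f0 by rewrite -{1}hf permK.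
have cA := card_agr htau hpi npt.
have cE : (#|[set x | tri f0 pi x == tri f0 tau x]| <= 3)%N.
  apply: leq_trans (subset_leq_card hsub) _.
  rewrite hu setUA setUid !cardsU1.
  exact: leq_trans (leq_add (leq_b1 _) (leq_add (leq_b1 _) cA)) _.
have := hd_compl (tri f0 pi) (tri f0 tau).
have := F4 hq.
rewrite hd4 => h4 h; exact: nat_b h4 cE h.
Qed.

Lemma nat_c (n k : nat) : (3 < n)%N -> (n - 4 + k)%N = n -> k = 4%N.
Proof. lia. Qed.

Lemma nat_c2 (x y z : bool) (k : nat) : (k <= 1)%N -> (4 <= x + (y + (z + k)))%N ->
  [/\ x, y, z & k = 1%N].
Proof. by case: x; case: y; case: z => /= h1 h2; try (split => //); lia. Qed.

Lemma nat_d (n : nat) : (n - 4)%N = (n - 1 - 3)%N.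
Proof. lia. Qed.

Lemma part_c (F : finFieldType) (f0 : F) (hq : (#|F| %% 3 = 1)%N)
    (pi sigma : {perm F}) (a b r s : F) (ha : a != 0) (hb : b != 0)
    (hsig : forall x, sigma x = a * x + r) (hpi : forall x, pi x = b * x + s) :
  adjC f0 pi sigma ->
     [/\ hd pi sigma = (#|F| - 1)%N,
         hd (tri f0 pi) (tri f0 sigma) = (hd pi sigma - 3)%N,
         (a / b) ^+ 2 + a / b + 1 = 0,
         (b / a) ^+ 2 + b / a + 1 = 0 &
         a / b != b / a].
Proof.
case/and4P => _ _ npq /eqP hd4.
have hsub := E_sub f0 pi sigma.
have cA := card_agr hsig hpi npq.
have h := hd_compl (tri f0 pi) (tri f0 sigma).
rewrite hd4 in h.
have cE4 := nat_c (F4 hq) h.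
have leS := subset_leq_card hsub.
rewrite cE4 !cardsU1 in leS.
have [b1 b2 b3 cA1] := nat_c2 cA leS.
have eES : [set x | tri f0 pi x == tri f0 sigma x] =
   f0 |: ((pi^-1)%g f0 |: ((sigma^-1)%g f0 |: [set x | pi x == sigma x])).
  apply/eqP; rewrite eqEcard hsub /= cE4 !cardsU1 b1 b2 b3 cA1 //.
have := b1; rewrite !inE !negb_or => /and3P [fu fv _].
have := b2; rewrite !inE !negb_or => /andP [uv _].
have uE : (pi^-1)%g f0 \in [set x | tri f0 pi x == tri f0 sigma x].
  by rewrite eES !inE eqxx /= orbT.
have vE : (sigma^-1)%g f0 \in [set x | tri f0 pi x == tri f0 sigma x].
  by rewrite eES !inE eqxx /= !orbT.
rewrite inE /tri [_ == f0]eq_sym (negbTE fu) eqxx (negbTE uv) in uE.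
rewrite inE /tri [_ == f0]eq_sym (negbTE fv) [_ == (pi^-1)%g f0]eq_sym (negbTE uv) eqxx in vE.
move/eqP: uE => e3; move/eqP: vE => e4.
have e1 : pi ((pi^-1)%g f0) = f0 by rewrite permKV.
have e2 : sigma ((sigma^-1)%g f0) = f0 by rewrite permKV.
have hab : a != b.
  have /card_gt0P [x0] : (0 < #|[set x | pi x == sigma x]|)%N by rewrite cA1.
  rewrite inE => /eqP hx0; apply: contraNneq npq => eab.
  rewrite hpi hsig -eab in hx0; have esr := addrI _ hx0.
  by apply/eqP/permP => z; rewrite hpi hsig -eab esr.
have hpq := part_a hsig hpi hab.
move: ((pi^-1)%g f0) ((sigma^-1)%g f0) fu fv uv e1 e2 e3 e4 => u v fu fv uv e1 e2 e3 e4.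
rewrite !hpi !hsig in e1 e2 e3 e4.
have Q : a ^+ 2 + a * b + b ^+ 2 = 0.
  have key : (a ^+ 2 + a * b + b ^+ 2) * (u - f0) =
     - (a + b) * ((b * f0 + s) - (a * u + r)) + a * ((b * v + s) - (a * f0 + r))
     + b * ((b * u + s - f0) - (a * v + r - f0)) by ring.
  rewrite e1 e2 e3 e4 !subrr !mulr0 !addr0 in key.
  move/eqP: key; rewrite mulf_eq0 subr_eq0 [u == f0]eq_sym (negbTE fu) orbF.
  by move/eqP.
split.
- exact: hpq.
- by rewrite hd4 hpq; exact: nat_d.
- have -> : (a / b) ^+ 2 + a / b + 1 = (a ^+ 2 + a * b + b ^+ 2) / b ^+ 2.
    by field.
  by rewrite Q mul0r.
- have -> : (b / a) ^+ 2 + b / a + 1 = (a ^+ 2 + a * b + b ^+ 2) / a ^+ 2.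
    by field.
  by rewrite Q mul0r.
- have h2 : (a - b) * (a + b) = (a / b - b / a) * (a * b) by field; rewrite ha hb.
  apply/eqP => e.
  rewrite e subrr mul0r in h2.
  move/eqP: h2; rewrite mulf_eq0 subr_eq0 (negbTE hab) /= => /eqP ab0.
  have hb2 : b ^+ 2 = (a ^+ 2 + a * b + b ^+ 2) - a * (a + b) by ring.
  rewrite Q ab0 mulr0 subrr in hb2.
  by move/eqP: hb2; rewrite expf_eq0 /= (negbTE hb).
Qed.

Theorem lemma4 (F : finFieldType) (f0 : F) (hq : (#|F| %% 3 = 1)%N)
    (pi sigma : {perm F}) (a b r s : F) (ha : a != 0) (hb : b != 0)
    (hsig : forall x, sigma x = a * x + r) (hpi : forall x, pi x = b * x + s) :
  (* (a) *)
  (a != b -> hd pi sigma = (#|F| - 1)%N) /\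
  (* (b) *)
  ((pi f0 = f0 -> forall tau : {perm F}, ~~ adjC f0 pi tau) /\
   #|[set p : {perm F} | is_affine p && (p f0 == f0)]| = (#|F| - 1)%N) /\
  (* (c) *)
  (adjC f0 pi sigma ->
     [/\ hd pi sigma = (#|F| - 1)%N,
         hd (tri f0 pi) (tri f0 sigma) = (hd pi sigma - 3)%N,
         (a / b) ^+ 2 + a / b + 1 = 0,
         (b / a) ^+ 2 + b / a + 1 = 0 &
         a / b != b / a]).
Proof.
split; first exact: part_a hsig hpi.
split; first split.
- exact: (@isolated F f0 hq pi b s hpi).
- exact: count_fix.
exact: (@part_c F f0 hq pi sigma a b r s ha hb hsig hpi).
Qed.
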